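(* Let $m,n$ be positive integers. The chromatic polynomial of a biclique $A(\mathcal{F})$ with $|C|=n$ and $\mathcal{F}=(F_1,\ldots,F_m)$ is determined by $n$ and the numbers $\left|\bigcap_{i\in I}F_i\right|$ for the nonempty subsets $I\subseteq\{1,\ldots,m\}$. That is, if $\mathcal{F}=(F_1,\ldots,F_m)$ is a family of subsets of an $n$-set $C$ and $\mathcal{F}'=(F'_1,\ldots,F'_m)$ is a family of subsets of an $n$-set $C'$ such that $\left|\bigcap_{i\in I}F_i\right|=\left|\bigcap_{i\in I}F'_i\right|$ for every nonempty $I\subseteq\{1,\ldots,m\}$, then $A(\mathcal{F})$ and $A(\mathcal{F}')$ have the same chromatic polynomial.
   Context: Given an $n$-element set $C$ and a sequence $\mathcal{F}=(F_1,\ldots,F_m)$ of subsets of $C$, the biclique $A(\mathcal{F})$ is the simple graph with vertex set $C\cup D$, where $D=\{w_1,\ldots,w_m\}$ is disjoint from $C$, in which $C$ and $D$ each induce complete graphs and, for each $i$, the neighbours of $w_i$ in $C$ are exactly the vertices of $F_i$. The chromatic polynomial $P_G(q)$ of a graph $G$ is the polynomial whose value at each positive integer $q$ is the number of proper colourings of $G$ with $q$ colours. *)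

(* Defs.v *)
From mathcomp Require Import all_boot all_order.
Set Implicit Arguments. Unset Strict Implicit. Unset Printing Implicit Defensive.

(* Adjacency of the biclique A(F): vertex set C + 'I_m (inl = vertices of C,
   inr i = w_i); C and D are cliques, and w_i ~ x iff x \in F i. *)
Definition biclique_adj (C : finType) (m : nat) (F : 'I_m -> {set C})
  (u v : C + 'I_m) : bool :=
  match u, v with
  | inl x, inl y => x != y
  | inr i, inr j => i != j
  | inl x, inr i => x \in F i
  | inr i, inl x => x \in F i
  end.

Definition proper_colouring (V : finType) (e : rel V) (q : nat)
  (f : {ffun V -> 'I_q}) : bool :=
  [forall u, forall v, e u v ==> (f u != f v)].

Definition chrom_count (V : finType) (e : rel V) (q : nat) : nat :=
  #|[set f : {ffun V -> 'I_q} | proper_colouring e f]|.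

(* Two graphs have the same chromatic polynomial iff the polynomials agree at
   every positive integer (infinitely many points). *)
Definition same_chromatic_polynomial (V V' : finType) (e : rel V) (e' : rel V')
  : Prop := forall q : nat, 0 < q -> chrom_count e q = chrom_count e' q.

(* Main.v *)
Require Import Defs.
From mathcomp Require Import all_boot all_order.
Set Implicit Arguments. Unset Strict Implicit.

Lemma chrom_le (V V' : finType) (e : rel V) (e' : rel V') (t : V -> V') (s : V' -> V)
  (ts : cancel s t) (he : forall u v, e u v = e' (t u) (t v)) q :
  chrom_count e' q <= chrom_count e q.
Proof.
rewrite /chrom_count.
pose Phi (f : {ffun V' -> 'I_q}) : {ffun V -> 'I_q} := [ffun v => f (t v)].
have Pinj : injective Phi.
  move=> f1 f2 h; apply/ffunP => w.
  have := congr1 (fun g : {ffun V -> 'I_q} => g (s w)) h.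
  by rewrite /Phi !ffunE ts.
rewrite -(card_imset _ Pinj); apply: subset_leq_card.
apply/subsetP => g /imsetP [f]; rewrite !inE => pf ->.
apply/forallP => u; apply/forallP => v; apply/implyP => euv.
rewrite /Phi !ffunE.
by move/forallP: pf => /(_ (t u)) /forallP /(_ (t v)) /implyP; apply; rewrite -he.
Qed.

Definition typ (C : finType) m (F : 'I_m -> {set C}) (x : C) : {set 'I_m} :=
  [set i | x \in F i].

Lemma g_split (C : finType) m (F : 'I_m -> {set C}) (S : {set 'I_m}) :
  #|[set x | S \subset typ F x]| =
  #|[set x | typ F x == S]| + \sum_(T : {set 'I_m} | S \proper T) #|[set x | typ F x == T]|.
Proof.
rewrite -sum1_card (partition_big (typ F) (fun T : {set 'I_m} => S \subset T)) /=; last first.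
  by move=> x; rewrite inE.
rewrite (bigD1 S) //=; congr (_ + _).
  rewrite -sum1_card; apply: eq_bigl => x; rewrite !inE.
  by case: eqP => [->|]; rewrite ?subxx ?andbF.
apply: eq_big => [T|T].
  by rewrite properEneq andbC eq_sym.
move=> /andP [sT _]; rewrite -sum1_card; apply: eq_bigl => x; rewrite !inE.
by case: eqP => [->|]; rewrite ?sT ?andbF.
Qed.

Lemma fibre_eq (C C' : finType) m (F : 'I_m -> {set C}) (F' : 'I_m -> {set C'}) :
  (forall S : {set 'I_m}, #|[set x | S \subset typ F x]| = #|[set x | S \subset typ F' x]|) ->
  forall S : {set 'I_m}, #|[set x | typ F x == S]| = #|[set x | typ F' x == S]|.
Proof.
move=> hg.
suff H : forall k (S : {set 'I_m}), #|~: S| < k -> #|[set x | typ F x == S]| = #|[set x | typ F' x == S]|.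
  by move=> S; apply: (H #|~: S|.+1).
elim=> [//|k IH] S hS.
have := hg S; rewrite !g_split.
have -> : \sum_(T : {set 'I_m} | S \proper T) #|[set x | typ F x == T]| =
          \sum_(T : {set 'I_m} | S \proper T) #|[set x | typ F' x == T]|.
  apply: eq_bigr => T sT; apply: IH.
  rewrite -properC in sT; have := proper_card sT; move: hS.
  rewrite !ltnS; move=> a b; exact: leq_trans b a.
by move/addIn.
Qed.

Lemma g_eq (C : finType) m (F : 'I_m -> {set C}) (S : {set 'I_m}) :
  S != set0 -> [set x | S \subset typ F x] = \bigcap_(i in S) F i.
Proof.
move=> _; apply/setP => x; rewrite inE; apply/subsetP/bigcapP => h i iS.
  by have := h i iS; rewrite inE.
by rewrite inE; apply: h.
Qed.

Lemma sigma_ex (C C' : finType) m (F : 'I_m -> {set C}) (F' : 'I_m -> {set C'}) (x0' : C') :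
  (forall S : {set 'I_m}, #|[set x | typ F x == S]| = #|[set x | typ F' x == S]|) ->
  exists sg : C -> C', injective sg /\ forall x, typ F' (sg x) = typ F x.
Proof.
move=> hf.
pose A (S : {set 'I_m}) := enum [set x | typ F x == S].
pose A' (S : {set 'I_m}) := enum [set x | typ F' x == S].
have szA S : size (A S) = size (A' S) by rewrite /A /A' -!cardE.
have inA x : x \in A (typ F x) by rewrite /A mem_enum inE.
have ltA x : index x (A (typ F x)) < size (A' (typ F x)) by rewrite -szA index_mem.
pose sg x := nth x0' (A' (typ F x)) (index x (A (typ F x))).
have hty x : typ F' (sg x) = typ F x.
  have := mem_nth x0' (ltA x); rewrite -/(sg x) /A' mem_enum inE.
  by move/eqP.
exists sg; split => // x y e.
have txy : typ F x = typ F y by rewrite -hty e hty.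
move: e; rewrite /sg -txy => /eqP.
have ltA' := ltA y; rewrite -txy in ltA'.
rewrite nth_uniq ?ltA ?enum_uniq // => /eqP e.
have iny := inA y; rewrite -txy in iny.
by rewrite -(nth_index x (inA x)) e (nth_index x iny).
Qed.

Lemma memtyp (C : finType) m (F : 'I_m -> {set C}) x i : (x \in F i) = (i \in typ F x).
Proof. by rewrite inE. Qed.

Theorem proposition3 (m n : nat) (hm : 0 < m) (hn : 0 < n)
  (C C' : finType) (hC : #|C| = n) (hC' : #|C'| = n)
  (F : 'I_m -> {set C}) (F' : 'I_m -> {set C'}) :
  (forall I : {set 'I_m}, I != set0 ->
     #|\bigcap_(i in I) F i| = #|\bigcap_(i in I) F' i|) ->
  same_chromatic_polynomial (biclique_adj F) (biclique_adj F').
Proof.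
move=> hI.
have hg : forall S : {set 'I_m}, #|[set x | S \subset typ F x]| = #|[set x | S \subset typ F' x]|.
  move=> S; case: (eqVneq S set0) => [->|nz]; last by rewrite !g_eq // hI.
  have -> : [set x | set0 \subset typ F x] = setT by apply/setP => x; rewrite !inE sub0set.
  have -> : [set x | set0 \subset typ F' x] = setT by apply/setP => x; rewrite !inE sub0set.
  by rewrite !cardsT hC hC'.
have := fibre_eq hg => hf.
have : 0 < #|C'| by rewrite hC'.
case/card_gt0P => x0' _.
have [sg [sginj hty]] := sigma_ex x0' hf.
have [sg' sgK sgK'] : bijective sg.
  by apply: (inj_card_bij sginj); rewrite hC hC'.
have hty' y : typ F (sg' y) = typ F' y by rewrite -hty sgK'.
pose t (u : C + 'I_m) : C' + 'I_m := match u with inl x => inl (sg x) | inr i => inr i end.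
pose s (u : C' + 'I_m) : C + 'I_m := match u with inl x => inl (sg' x) | inr i => inr i end.
have ts : cancel s t by case=> [x|i] //=; rewrite sgK'.
have st : cancel t s by case=> [x|i] //=; rewrite sgK.
have he : forall u v, biclique_adj F u v = biclique_adj F' (t u) (t v).
  case=> [x|i] [y|j] //=; rewrite ?(inj_eq sginj) // !memtyp hty //.
move=> q _; apply/eqP; rewrite eqn_leq; apply/andP; split.
  apply: (chrom_le (t := s) (s := t)) => // u v.
  by rewrite -{1}(ts u) -{1}(ts v) he.
exact: (chrom_le (t := t) (s := s)).
Qed.
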